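(* Let $E/\mathbb{Q}$ be an elliptic curve of conductor $N$, $p$ a prime of good supersingular reduction, and $\chi$ the trivial or a quadratic Dirichlet character. Let $Q$ be the largest divisor of $N$ coprime to $p$ and to the conductor of $\chi$. Suppose $L_p^\sharp(E,\chi,T)$ and $L_p^\flat(E,\chi,T)$ are nonzero and write their Taylor expansions at $T=0$ as $$L_p^\sharp(E,\chi,T)=a_\sharp T^{m_\sharp}+b_\sharp T^{m_\sharp+1}+\cdots,\qquad L_p^\flat(E,\chi,T)=a_\flat T^{m_\flat}+b_\flat T^{m_\flat+1}+\cdots$$ with $a_\sharp,a_\flat\neq0$. Then $$b_\sharp=-\frac{a_\sharp}{2}\big(\log_\gamma(Q)+m_\sharp\big),\qquad b_\flat=-\frac{a_\flat}{2}\big(\log_\gamma(Q)+m_\flat\big).$$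
   Context: Notation: $\gamma$ is a topological generator of $\mathrm{Gal}(\mathbb{Q}_\infty/\mathbb{Q})\cong\mathbb{Z}_p$, $\kappa$ the cyclotomic character, $\langle x\rangle$ the projection of $x\in\mathbb{Z}_p^\times$ to $1+p\mathbb{Z}_p$ ($1+4\mathbb{Z}_2$ if $p=2$), $\log_\gamma(x)=\log\langle x\rangle/\log\kappa(\gamma)$, and $(1+T)^a=\sum_n\binom{a}{n}T^n$ for $a\in\mathbb{Z}_p$. For a Dirichlet character $\psi$, $c_Q\in\{\pm1\}$ is defined by $f|_{\left(\begin{smallmatrix}0&-1\\Q&0\end{smallmatrix}\right)}=c_Qf$, $f$ the newform of $E$. The $\sharp/\flat$ $p$-adic $L$-functions $L_p^\sharp(E,\psi,T),L_p^\flat(E,\psi,T)$ (Sprung's completed versions) are integral power series satisfying $(L_\alpha(E,\psi,T),L_\beta(E,\psi,T))=(L_p^\sharp,L_p^\flat)\mathcal{L}og_{\alpha,\beta}(1+T)$ with $L_\alpha,L_\beta$ the Amice–Vélu–Višik $p$-adic $L$-functions, and the functional equation, for $\bullet\in\{\sharp,\flat\}$, $$L_p^{\bullet}(E,\psi,T)=-(1+T)^{-\log_\gamma(Q)}\,\overline{\psi}(-Q)\,c_Q\,L_p^{\bullet}\Big(E,\overline{\psi},\tfrac{1}{1+T}-1\Big).$$ *)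

(* Defs.v *)
From HB Require Import structures.
From mathcomp Require Import all_boot all_order all_algebra.
Set Implicit Arguments. Unset Strict Implicit. Unset Printing Implicit Defensive.
Import Order.TTheory GRing.Theory Num.Theory.
Local Open Scope ring_scope.

Definition pseries (K : fieldType) := nat -> K.

Definition psmul (K : fieldType) (f g : pseries K) : pseries K :=
  fun n => \sum_(i < n.+1) f i * g (n - i)%N.

Definition psone (K : fieldType) : pseries K := fun n => if n is 0%N then 1 else 0.

Fixpoint psexp (K : fieldType) (g : pseries K) (k : nat) : pseries K :=
  if k is k'.+1 then psmul g (psexp g k') else psone K.

(* composition f(g(T)), meaningful when g has zero constant term *)
Definition pscomp (K : fieldType) (f g : pseries K) : pseries K :=
  fun n => \sum_(k < n.+1) f k * psexp g k n.

(* (1+T)^a = sum_n binom(a,n) T^n, a in K *)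
Definition psbinom (K : fieldType) (a : K) : pseries K :=
  fun n => (\prod_(i < n) (a - i%:R)) / (n`!)%:R.

(* the power series 1/(1+T) - 1 = sum_{n>=1} (-1)^n T^n *)
Definition psinvshift (K : fieldType) : pseries K :=
  fun n => if n is 0%N then 0 else (-1) ^+ n.

(* Functional equation of Sec. context, for a quadratic/trivial character chi
   (so chi-bar = chi):  F(T) = - (1+T)^(-lam) * eps * F(1/(1+T) - 1),
   where lam = log_gamma(Q) and eps = chi(-Q) c_Q in {1,-1}. *)
Definition satisfies_FE (K : fieldType) (lam eps : K) (F : pseries K) : Prop :=
  forall n, F n = - eps * psmul (psbinom (- lam)) (pscomp F (psinvshift K)) n.

(* Main.v *)
Require Import Defs.
From HB Require Import structures.
From mathcomp Require Import all_boot all_order all_algebra.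
From mathcomp Require Import ring zify.
Import GRing.Theory.
Local Open Scope ring_scope.

Section Aux.
Variable K : fieldType.
Notation S := (psinvshift K).

Lemma Sz k n : (n < k)%N -> psexp S k n = 0.
Proof.
elim: k n => [//|k IH] n Hn /=.
rewrite /psmul big1 // => -[[|i] Hi] _ /=; first by rewrite mul0r.
rewrite IH ?mulr0 //.
by rewrite ltn_subLR // addSn ltnS -ltnS (leq_trans Hn) //= ltnS leq_addl.
Qed.

Lemma Sk k : psexp S k k = (-1) ^+ k.
Proof.
elim: k => [//|k IH] /=.
rewrite /psmul big_ord_recl /= mul0r add0r big_ord_recl /= subSS subn0 IH.
rewrite big1 ?addr0; first by rewrite exprS mulN1r.
move=> i _; rewrite Sz ?mulr0 //.
rewrite /bump /=; have := ltn_ord i; lia.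
Qed.

Lemma Sk1 k : psexp S k k.+1 = (-1) ^+ k.+1 * k%:R.
Proof.
elim: k => [|k IH] /=; first by rewrite mulr0.
rewrite /psmul big_ord_recl /= mul0r add0r big_ord_recl /= subSS subn0 IH.
rewrite big_ord_recl /= /bump /= !add1n !subSS subn0 Sk.
rewrite big1 ?addr0.
  by rewrite !exprS -[k.+1]addn1 natrD; ring.
move=> i _; rewrite Sz ?mulr0 //.
rewrite /bump /=; have := ltn_ord i; lia.
Qed.

Lemma main (Hchar : [pchar K] =i pred0) (lam eps : K) (Heps : eps = 1 \/ eps = -1)
  (F : pseries K) (FE : satisfies_FE lam eps F) (m : nat)
  (Hz : forall n, (n < m)%N -> F n = 0) (Ha : F m != 0) :
  F m.+1 = - (F m / 2) * (lam + m%:R).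
Proof.
set C := pscomp F S.
have C0 : forall j, (j < m)%N -> C j = 0.
  move=> j Hj; rewrite /C /pscomp big1 // => i _.
  by rewrite Hz ?mul0r // (leq_trans _ Hj) // ltnS -ltnS.
have Cm : C m = F m * (-1) ^+ m.
  rewrite /C /pscomp big_ord_recr /= Sk big1 ?add0r // => i _.
  by rewrite Hz ?mul0r.
have Cm1 : C m.+1 = F m.+1 * (-1) ^+ m.+1 + F m * ((-1) ^+ m.+1 * m%:R).
  rewrite /C /pscomp big_ord_recr (Sk m.+1) big_ord_recr (Sk1 m) /= big1 ?add0r ?addrA; first exact: addrC.
  by move=> i _; rewrite Hz ?mul0r.
have B0 : psbinom (- lam) 0 = 1 by rewrite /psbinom big_ord0 divr1.
have B1 : psbinom (- lam) 1 = - lam.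
  by rewrite /psbinom big_ord1 /= subr0 divr1.
have E1 := FE m; have E2 := FE m.+1; rewrite -/C in E1 E2.
rewrite /psmul big_ord_recl big1 ?addr0 in E1; last first.
  by move=> i _; rewrite C0 ?mulr0 //; rewrite /= /bump /= ?add1n; have := ltn_ord i; lia.
rewrite subn0 B0 mul1r Cm in E1.
rewrite /psmul big_ord_recl big_ord_recl big1 ?addr0 in E2; last first.
  by move=> i _; rewrite C0 ?mulr0 //; rewrite /= /bump /= ?add1n; have := ltn_ord i; lia.
have l1 : nat_of_ord (lift ord0 (@ord0 m)) = 1%N by [].
rewrite l1 /= !subn0 subn1 /= B0 B1 mul1r Cm Cm1 in E2.
have two : (2 : K) != 0.
  apply/negP => /eqP h; move: (Hchar 2); rewrite !inE /=.
  by move/negbT/eqP; apply.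
rewrite exprS mulN1r in E2.
set a := F m in E1 E2 Ha *; set b := F m.+1 in E2 *.
set t := (-1) ^+ m in E1 E2.
move: E1 => /eqP; rewrite -subr_eq0 => /eqP e1.
have s : eps * t = -1.
  have : a * (1 + eps * t) = 0 by rewrite -e1; ring.
  move/eqP; rewrite mulf_eq0 (negbTE Ha) /= addrC addr_eq0.
  by move/eqP.
move: E2 => /eqP; rewrite -subr_eq0 => /eqP e2.
have h : 2 * b + a * (lam + m%:R) - (1 + eps * t) * (b + a * m%:R + lam * a) = 0.
  by rewrite -e2; ring.
rewrite s subrr mul0r subr0 in h.
have h2 : 2 * b = - (a * (lam + m%:R)) by apply/eqP; rewrite -addr_eq0 h.
apply: (mulfI two); rewrite h2; field; exact: two.
Qed.
End Aux.

Theorem theorem4p4 (K : fieldType) (Hchar : [pchar K] =i pred0)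
  (lam eps : K) (Heps : eps = 1 \/ eps = -1)
  (Lsharp Lflat : pseries K)
  (FEsharp : satisfies_FE lam eps Lsharp)
  (FEflat : satisfies_FE lam eps Lflat)
  (msharp mflat : nat)
  (Hzs : forall n, (n < msharp)%N -> Lsharp n = 0) (Has : Lsharp msharp != 0)
  (Hzf : forall n, (n < mflat)%N -> Lflat n = 0) (Haf : Lflat mflat != 0) :
  Lsharp msharp.+1 = - (Lsharp msharp / 2) * (lam + msharp%:R) /\
  Lflat mflat.+1 = - (Lflat mflat / 2) * (lam + mflat%:R).
Proof.
split; [exact: (@main K Hchar lam eps Heps _ FEsharp _ Hzs Has) | exact: (@main K Hchar lam eps Heps _ FEflat _ Hzf Haf)].
Qed.
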